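(* For any $F\in\mathscr{F}_2$ and $i\in[F]$: (i) for any $s\in\mathcal{S}$, with $f_i(s)=\gamma(s_1)\cdots\gamma(s_\rho)$ the $\gamma$-decomposition, $|\ddot{\gamma}(s_r)|=|\gamma(s_r)|$ for all $r=1,\dots,\rho$; (ii) $|\ddot{f}_i(s)|=|f_i(s)|$ for all $s\in\mathcal{S}$; (iii) for any $s,s'\in\mathcal{S}$, $f_i(s)\preceq f_i(s')$ if and only if $\ddot{f}_i(s)\preceq\ddot{f}_i(s')$.
   Context: $\mathcal{S}$ is a finite source alphabet with $|\mathcal{S}|\ge 2$ and $\mathcal{C}=\{0,1\}$; $\mathcal{A}^k,\mathcal{A}^{\ast},\mathcal{A}^{+}$ are sequences of length $k$, finite, positive finite length; $\lambda$ empty sequence; $\preceq$ prefix, $\prec$ proper prefix; $\mathrm{suff}(x_1\cdots x_n)=x_2\cdots x_n$; $\bar{c}=1-c$ for $c\in\mathcal{C}$. A code-tuple $F$ with $m\ge1$ code tables consists of maps $f_i:\mathcal{S}\to\mathcal{C}^{\ast}$ and $\tau_i:\mathcal{S}\to\{0,\dots,m-1\}$, $i\in[F]=\{0,\dots,m-1\}$. $f_i^{\ast}(\lambda)=\lambda$, $f_i^{\ast}(\pmb{x})=f_i(x_1)f^{\ast}_{\tau_i(x_1)}(\mathrm{suff}(\pmb{x}))$. For integer $k\ge0$, $\pmb{b}\in\mathcal{C}^{\ast}$: $\mathcal{P}^k_{F,i}(\pmb{b})$ is the set of $\pmb{c}\in\mathcal{C}^k$ such that some $\pmb{x}=x_1\cdots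 x_n\in\mathcal{S}^{+}$ has $f_i^{\ast}(\pmb{x})\succeq\pmb{b}\pmb{c}$ and $f_i(x_1)\succeq\pmb{b}$; $\bar{\mathcal{P}}^k_{F,i}(\pmb{b})$ the same with $f_i(x_1)\succ\pmb{b}$; $\mathcal{P}^k_{F,i}=\mathcal{P}^k_{F,i}(\lambda)$. $F\in\mathscr{F}_{2\text{-}\mathrm{dec}}$ if $\mathcal{P}^2_{F,\tau_i(s)}\cap\bar{\mathcal{P}}^2_{F,i}(f_i(s))=\emptyset$ for all $i,s$, and $\mathcal{P}^2_{F,\tau_i(s)}\cap\mathcal{P}^2_{F,\tau_i(s')}=\emptyset$ whenever $s\ne s'$, $f_i(s)=f_i(s')$. Fix $\mu:\mathcal{S}\to(0,1]$ with $\sum_s\mu(s)=1$; $Q_{i,j}(F)=\sum_{s:\tau_i(s)=j}\mu(s)$; $F\in\mathscr{F}_{\mathrm{reg}}$ if $\pmb{\pi}Q(F)=\pmb{\pi}$, $\sum_i\pi_i=1$ has a unique solution. $\mathscr{F}_2=\{F\in\mathscr{F}_{\mathrm{reg}}\cap\mathscr{F}_{2\text{-}\mathrm{dec}}:|\mathcal{P}^2_{F,i}|\ge3\ \forall i\in[F]\}$ (every such $F$ satisfies $\mathcal{P}^1_{F,i}=\{0,1\}$ for all $i$). $\gamma$-decomposition: for $F\in\mathscr{F}_2$, $i\in[F]$, $s\in\mathcal{S}$, the symbols $s'$ with $f_i(s')\prec f_i(s)$ have pairwise distinct codewords; list them together with $s$ as $s_1,\dots,s_\rho$ with $s_\rho=s$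 and $f_i(s_1)\prec\cdots\prec f_i(s_\rho)$; set $\gamma(s_1)=f_i(s_1)$ and $f_i(s_r)=f_i(s_{r-1})\gamma(s_r)$ for $r\ge2$. The code-tuple $\ddot{F}$: $\ddot{\tau}_i=\tau_i$ and $\ddot{f}_i(s)=\ddot{\gamma}(s_1)\cdots\ddot{\gamma}(s_\rho)$ where, writing $\gamma(s_r)=g_1g_2\cdots g_l$: $\ddot{\gamma}(s_r)=\gamma(s_r)$ if $r=1$ and $|\mathcal{P}^2_{F,i}|=4$; $\ddot{\gamma}(s_r)=1$ if $r=1$, $|\mathcal{P}^2_{F,i}|=3$, $|\gamma(s_r)|=1$; $\ddot{\gamma}(s_r)=01g_3\cdots g_l$ if $r=1$, $|\mathcal{P}^2_{F,i}|=3$, $|\gamma(s_r)|\ge2$, $g_1\bar{g_2}\notin\mathcal{P}^2_{F,i}$; $\ddot{\gamma}(s_r)=1g_2g_3\cdots g_l$ if $r=1$, $|\mathcal{P}^2_{F,i}|=3$, $|\gamma(s_r)|\ge2$, $g_1\bar{g_2}\in\mathcal{P}^2_{F,i}$; $\ddot{\gamma}(s_r)=00g_3\cdots g_l$ if $r\ge2$. *)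

(* Defs.v *)
From HB Require Import structures.
From mathcomp Require Import all_boot all_order all_algebra.
From mathcomp Require Import boolp reals.
Set Implicit Arguments. Unset Strict Implicit. Unset Printing Implicit Defensive.
Import Order.TTheory GRing.Theory Num.Theory.

(* Code alphabet C = {0,1} is rendered as bool (false = 0, true = 1);
   codewords are seq bool; prefix is seq's [prefix]. *)

Record codeTuple (S : finType) (m : nat) := CodeTuple {
  ct_f : 'I_m -> S -> seq bool;
  ct_tau : 'I_m -> S -> 'I_m }.

Section Defs.
Variables (S : finType) (m : nat).
Implicit Types (F : codeTuple S m) (i : 'I_m).

Fixpoint fstar F i (x : seq S) : seq bool :=
  if x is a :: x' then ct_f F i a ++ fstar F (ct_tau F i a) x' else [::].

Definition Pset F i (k : nat) (b c : seq bool) : Prop :=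
  size c = k /\ exists (a : S) (x : seq S),
    prefix (b ++ c) (fstar F i (a :: x)) /\ prefix b (ct_f F i a).

Definition Pbar F i (k : nat) (b c : seq bool) : Prop :=
  size c = k /\ exists (a : S) (x : seq S),
    prefix (b ++ c) (fstar F i (a :: x)) /\
    (prefix b (ct_f F i a) && (b != ct_f F i a)).

Definition card_P2 F i : nat :=
  #|[set c : bool * bool | `[< Pset F i 2 [::] [:: c.1; c.2] >]]|.

Definition dec2 F : Prop :=
  (forall i (s : S) (c : seq bool),
      ~ (Pset F (ct_tau F i s) 2 [::] c /\ Pbar F i 2 (ct_f F i s) c)) /\
  (forall i (s s' : S), s != s' -> ct_f F i s = ct_f F i s' ->
     forall c : seq bool,
      ~ (Pset F (ct_tau F i s) 2 [::] c /\ Pset F (ct_tau F i s') 2 [::] c)).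

Definition Qmx (R : realType) (mu : S -> R) F : 'M[R]_m :=
  (\matrix_(i, j) \sum_(s | ct_tau F i s == j) mu s)%R.

Definition regular (R : realType) (mu : S -> R) F : Prop :=
  exists! pi : 'rV[R]_m, (pi *m Qmx mu F = pi /\ \sum_j pi 0 j = 1)%R.

Definition inF2 (R : realType) (mu : S -> R) F : Prop :=
  regular mu F /\ dec2 F /\ forall i, (3 <= card_P2 F i)%N.

(* gamma-decomposition of f_i(s): the chain of codewords
   f_i(s_1) < ... < f_i(s_rho) = f_i(s), i.e. all codewords f_i(s') that are
   proper prefixes of f_i(s), followed by f_i(s), sorted by length. *)
Definition gchain F i (s : S) : seq (seq bool) :=
  sort (fun u v : seq bool => size u <= size v)
    (undup [seq ct_f F i s' | s' <- enum S &
              prefix (ct_f F i s') (ct_f F i s) && (ct_f F i s' != ct_f F i s)])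
  ++ [:: ct_f F i s].

(* the pieces gamma(s_1), ..., gamma(s_rho):
   gamma(s_1) = f_i(s_1), f_i(s_r) = f_i(s_{r-1}) gamma(s_r) *)
Definition gpieces F i (s : S) : seq (seq bool) :=
  pairmap (fun u v : seq bool => drop (size u) v) [::] (gchain F i s).

(* \ddot gamma(s_r), with r 0-indexed (r = 0 is the paper's r = 1) *)
Definition ddgamma F i (r : nat) (g : seq bool) : seq bool :=
  if r == 0 then
    if card_P2 F i == 4 then g
    else if card_P2 F i == 3 then
      match g with
      | [::] => g
      | [:: _] => [:: true]
      | g1 :: g2 :: _ =>
          if `[< Pset F i 2 [::] [:: g1; ~~ g2] >] then true :: behead g
          else [:: false; true] ++ drop 2 g
      end
    else g
  else [:: false; false] ++ drop 2 g.

Definition ddf F i (s : S) : seq bool :=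
  let gs := gpieces F i s in
  flatten [seq ddgamma F i r (nth [::] gs r) | r <- iota 0 (size gs)].

End Defs.

(* Main.v *)
Require Import Defs.
From HB Require Import structures.
From mathcomp Require Import all_boot all_order all_algebra.
From mathcomp Require Import boolp reals.
Import Order.TTheory GRing.Theory Num.Theory.
Set Implicit Arguments. Unset Strict Implicit. Unset Printing Implicit Defensive.

Definition cmpw (a b : seq bool) := prefix a b || prefix b a.

Lemma pre_eq (a b w : seq bool) : prefix a w -> prefix b w -> size a = size b -> a = b.
Proof. by rewrite !prefixE => /eqP Ha /eqP Hb e; rewrite -Ha -Hb e. Qed.

Lemma pre_le (a b w : seq bool) : prefix a w -> prefix b w -> size a <= size b -> prefix a b.
Proof.
move=> Ha Hb le; move: Ha Hb; rewrite !prefixE => /eqP Ha /eqP Hb.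
by rewrite -Hb take_takel // Ha.
Qed.

Lemma cmp_pre (a b w : seq bool) : prefix a w -> prefix b w -> cmpw a b.
Proof.
move=> Ha Hb; rewrite /cmpw; case: (leqP (size a) (size b)) => h.
  by rewrite (pre_le Ha Hb h).
by rewrite (pre_le Hb Ha (ltnW h)) orbT.
Qed.

Lemma cmp_cat (a a' R R' : seq bool) : prefix (a ++ R) (a' ++ R') -> cmpw a a'.
Proof.
move=> H; apply: (@cmp_pre _ _ (a' ++ R')); last exact: prefix_prefix.
exact: prefix_trans (prefix_prefix _ _) H.
Qed.

Lemma prefix_catl2 (c a b : seq bool) : prefix (c ++ a) (c ++ b) = prefix a b.
Proof. by elim: c => //= x c IH; rewrite eqxx. Qed.

Lemma cmp_catl (c a b : seq bool) : cmpw (c ++ a) (c ++ b) = cmpw a b.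
Proof. by rewrite /cmpw !prefix_catl2. Qed.

Lemma prefix_neq_size (a b : seq bool) : prefix a b -> a != b -> size a < size b.
Proof.
case/prefixP => t ->; case: t => [|x t]; first by rewrite cats0 eqxx.
by rewrite size_cat /= addnS ltnS leq_addr.
Qed.

Lemma strict_pw (w : seq bool) (l : seq (seq bool)) : uniq l -> all (fun x => prefix x w) l ->
  pairwise (fun a b : seq bool => size a <= size b) l ->
  pairwise (fun a b : seq bool => size a < size b) l.
Proof.
elim: l => //= x l IH /andP[xl ul] /andP[xw aw] /andP[al pl].
rewrite IH // andbT; apply/allP => y yl.
have := allP al y yl; rewrite leq_eqVlt; case/orP => // /eqP e.
have yw := allP aw y yl.
by rewrite (pre_eq xw yw e) yl in xl.
Qed.

Lemma card3_two (A : {set bool * bool}) (q1 q2 : bool * bool) :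
  3 <= #|A| -> q1 != q2 -> (q1 \in A) || (q2 \in A).
Proof.
move=> hA hq; apply/negPn/negP; rewrite negb_or => /andP[n1 n2].
have sub : A \subset ~: [set q1; q2].
  apply/subsetP => x xA; rewrite !inE; apply/negP => /orP[] /eqP ex.
    by rewrite -ex xA in n1.
  by rewrite -ex xA in n2.
have := subset_leq_card sub.
have := cardsC [set q1; q2]; rewrite cards2 hq card_prod card_bool /= => e.
have h2 : #|~: [set q1; q2]| <= 2 by rewrite -(leq_add2l 2) e.
move=> h; have := leq_trans hA (leq_trans h h2); by [].
Qed.

Definition Aset (S : finType) (m : nat) (F : codeTuple S m) (j : 'I_m) :=
  [set c : bool * bool | `[< Pset F j 2 [::] [:: c.1; c.2] >]].

Lemma head_ex (S : finType) (m : nat) (F : codeTuple S m) (j : 'I_m) (d : bool) :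
  3 <= card_P2 F j -> exists a x e, prefix [:: d; e] (fstar F j (a :: x)).
Proof.
move=> H3; have := @card3_two (Aset F j) (d, false) (d, true) H3 ltac:(by rewrite xpair_eqE eqxx andbF).
by case/orP; rewrite inE => /asboolP [_ [a [x [hp _]]]]; [exists a, x, false | exists a, x, true]; exact: hp.
Qed.

Lemma Pbar_uniq (S : finType) (m : nat) (F : codeTuple S m) (i : 'I_m) a c1 c2 :
  dec2 F -> (forall j, 3 <= card_P2 F j) ->
  Pbar F i 2 (ct_f F i a) c1 -> Pbar F i 2 (ct_f F i a) c2 -> c1 = c2.
Proof.
move=> [D1 _] H3 h1 h2.
case: c1 h1 => [|x1 [|y1 [|z1 l1]]] h1; try by case: h1 => /eqP.
case: c2 h2 => [|x2 [|y2 [|z2 l2]]] h2; try by case: h2 => /eqP.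
apply/eqP/negPn/negP => ne.
have ne' : (x1, y1) != (x2, y2).
  apply/negP => /eqP [e1 e2]; by rewrite e1 e2 eqxx in ne.
have := card3_two (H3 (ct_tau F i a)) ne'.
by case/orP; rewrite inE => /asboolP hP; [exact: (D1 i a _ (conj hP h1)) | exact: (D1 i a _ (conj hP h2))].
Qed.

Lemma strict_ext (S : finType) (m : nat) (F : codeTuple S m) (i : 'I_m) a b :
  dec2 F -> (forall j, 3 <= card_P2 F j) ->
  prefix (ct_f F i a) (ct_f F i b) -> ct_f F i a != ct_f F i b ->
  size (ct_f F i a) + 2 <= size (ct_f F i b) /\
  Pbar F i 2 (ct_f F i a) (take 2 (drop (size (ct_f F i a)) (ct_f F i b))).
Proof.
move=> Hd H3 hp hn.
have hpn : prefix (ct_f F i a) (ct_f F i b) && (ct_f F i a != ct_f F i b) by rewrite hp hn.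
have [t Hb] := prefixP hp.
case: t Hb => [|g1 [|g2 t]] Hb.
- by rewrite Hb cats0 eqxx in hn.
- exfalso.
  have P d : Pbar F i 2 (ct_f F i a) [:: g1; d].
    have [a' [x' [e he]]] := head_ex d (H3 (ct_tau F i b)).
    split => //; exists b, (a' :: x'); split => //.
    rewrite /= Hb -catA prefix_catl2 /= eqxx /=.
    exact: (@catl_prefix _ [:: d] _ [:: e]).
  by have := Pbar_uniq Hd H3 (P false) (P true).
  rewrite Hb size_cat /= drop_size_cat //=.
  split; first by rewrite leq_add2l.
  rewrite take0; split => //; exists b, [::]; split => //.
  by rewrite /= Hb -catA prefix_catl2 /= !eqxx /= prefix0s.
Qed.

Definition dform (q1 q2 : bool) (u du : seq bool) :=
  (u != [::] /\ head false u != q1 /\ du = true :: behead u) \/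
  (exists t, u = q1 :: ~~ q2 :: t /\ du = false :: true :: t).

Lemma cmp_aux q1 q2 u u' du du' R R' : dform q1 q2 u du -> dform q1 q2 u' du' ->
  prefix (du ++ R) (du' ++ R') -> cmpw u u'.
Proof.
case=> [[nu [hu ->]] | [t [-> ->]]]; case=> [[nu' [hu' ->]] | [t' [-> ->]]] //=.
- case: u nu hu => [|h t] // _ /= hu; case: u' nu' hu' => [|h' t'] // _ /= hu' hp.
  have -> : h' = h by move: hu hu'; case: h; case: h'; case: q1.
  rewrite (cmp_catl [:: h]); exact: (@cmp_cat _ _ R R').
- by rewrite -[[:: q1, ~~ q2 & t]]/([:: q1; ~~ q2] ++ t) -[[:: q1, ~~ q2 & t']]/([:: q1; ~~ q2] ++ t') cmp_catl => hp; exact: (@cmp_cat _ _ R R').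
Qed.

Lemma dd0_form (S : finType) (m : nat) (F : codeTuple S m) (i : 'I_m) (q : bool * bool) a :
  (forall j, 3 <= card_P2 F j) -> card_P2 F i = 3 -> q \notin Aset F i ->
  ct_f F i a != [::] -> dform q.1 q.2 (ct_f F i a) (ddgamma F i 0 (ct_f F i a)).
Proof.
move=> H3 Hc; case: q => q1 q2 hq /=.
have HA : #|Aset F i| = 3 by [].
rewrite /ddgamma /= Hc /=.
case E: (ct_f F i a) => [|g1 [|g2 t]] //= _.
- left; split => //; split => //.
  apply/negP => /eqP e; move: hq; rewrite -e; apply/negP/negPn.
  rewrite inE; apply/asboolP; split => //.
  have [a' [x' [e' he]]] := head_ex q2 (H3 (ct_tau F i a)).
  exists a, (a' :: x'); split; last exact: prefix0s.
  rewrite /= E /= eqxx /=; exact: (@catl_prefix _ [:: q2] _ [:: e']).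
- have inA : (g1, g2) \in Aset F i.
    rewrite inE; apply/asboolP; split => //; exists a, [::]; split; last exact: prefix0s.
    by rewrite /= E /= !eqxx /= prefix0s.
  case: ifP => hP.
  + left; split => //; split => //.
    apply/negP => /eqP e1.
    case: (boolP (g2 == q2)) => e2.
      by move: hq; rewrite -e1 -(eqP e2) inA.
    have e3 : ~~ g2 = q2 by move: e2; case: (g2); case: (q2).
    by move: hq; rewrite -e1 -e3 inE hP.
  + right; exists t; split; last by rewrite drop0.
    have nA : (g1, ~~ g2) \notin Aset F i by rewrite inE /= hP.
    case: (boolP ((g1, ~~ g2) == (q1, q2))) => [/eqP [<- <-] | ne] /=; first by rewrite negbK.
    by have := card3_two (ltac:(by rewrite HA) : 3 <= #|Aset F i|) ne; rewrite (negbTE nA) (negbTE hq).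
Qed.

Lemma dd0_cmp (S : finType) (m : nat) (F : codeTuple S m) (i : 'I_m) a a' R R' :
  (forall j, 3 <= card_P2 F j) -> card_P2 F i = 3 ->
  prefix (ddgamma F i 0 (ct_f F i a) ++ R) (ddgamma F i 0 (ct_f F i a') ++ R') ->
  cmpw (ct_f F i a) (ct_f F i a').
Proof.
move=> H3 Hc hp.
case: (pickP (fun q => q \notin Aset F i)) => [q hq | H]; last first.
  have : Aset F i = setT.
    by apply/setP => q; rewrite in_setT; move: (H q) => /negbFE.
  by move=> e; move: Hc; rewrite /card_P2 -/(Aset F i) e cardsT card_prod card_bool.
case: (boolP (ct_f F i a == [::])) => [/eqP -> | n1]; first by rewrite /cmpw prefix0s.
case: (boolP (ct_f F i a' == [::])) => [/eqP -> | n2]; first by rewrite /cmpw prefix0s orbT.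
exact: (cmp_aux (dd0_form H3 Hc hq n1) (dd0_form H3 Hc hq n2) hp).
Qed.

Lemma gchain_mem (S : finType) (m : nat) (F : codeTuple S m) (i : 'I_m) s x :
  x \in gchain F i s -> prefix x (ct_f F i s) /\ exists a, x = ct_f F i a.
Proof.
rewrite /gchain mem_cat mem_sort mem_undup inE; case/orP => [/mapP [s'] | /eqP ->].
  by rewrite mem_filter => /andP[/andP[hp _] _] ->; split => //; exists s'.
by split; [exact: prefix_refl | exists s].
Qed.

Lemma gchain_compl (S : finType) (m : nat) (F : codeTuple S m) (i : 'I_m) s a :
  prefix (ct_f F i a) (ct_f F i s) -> ct_f F i a \in gchain F i s.
Proof.
move=> hp; rewrite /gchain mem_cat inE; case: (boolP (ct_f F i a == ct_f F i s)) => [/eqP ->|ne].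
  by rewrite orbT.
by rewrite mem_sort mem_undup; apply/orP; left; apply/mapP; exists a => //; rewrite mem_filter hp ne mem_enum.
Qed.

Lemma gchain_pw (S : finType) (m : nat) (F : codeTuple S m) (i : 'I_m) s :
  pairwise (fun a b : seq bool => size a < size b) (gchain F i s).
Proof.
rewrite /gchain pairwise_cat /= andbT.
set l := undup _.
have hl : forall x, x \in l -> prefix x (ct_f F i s) && (x != ct_f F i s).
  move=> x; rewrite mem_undup => /mapP [s']; rewrite mem_filter => /andP[h _] ->; exact: h.
apply/andP; split.
  apply/allrelP => x y; rewrite mem_sort inE => /hl /andP[hp hn] /eqP ->.
  exact: prefix_neq_size.
apply: (@strict_pw (ct_f F i s)).
- by rewrite sort_uniq undup_uniq.
- by apply/allP => x; rewrite mem_sort => /hl /andP[].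
- rewrite -sorted_pairwise; last by move=> y x z; apply: leq_trans.
  by apply: sort_sorted => x y; apply: leq_total.
Qed.

Lemma gchain_last (S : finType) (m : nat) (F : codeTuple S m) (i : 'I_m) s :
  last [::] (gchain F i s) = ct_f F i s /\ ct_f F i s \in gchain F i s.
Proof. by rewrite /gchain last_cat /= mem_cat mem_head orbT. Qed.

Fixpoint dds (S : finType) (m : nat) (F : codeTuple S m) (i : 'I_m) (n : nat)
  (prev : seq bool) (L : seq (seq bool)) : seq bool :=
  if L is x :: L' then ddgamma F i n (drop (size prev) x) ++ dds F i n.+1 x L' else [::].

Lemma dds_gen (S : finType) (m : nat) (F : codeTuple S m) (i : 'I_m) L prev n :
  flatten [seq ddgamma F i (n + r)
     (nth [::] (pairmap (fun u v : seq bool => drop (size u) v) prev L) r)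
     | r <- iota 0 (size L)] = dds F i n prev L.
Proof.
elim: L prev n => [|x L IH] prev n //=.
rewrite addn0 -(IH x n.+1) -[1]/(1 + 0) iotaDl -map_comp.
congr (_ ++ flatten _); apply: eq_map => r /=.
by rewrite add0n add1n addnS addSn.
Qed.

Lemma ddfE (S : finType) (m : nat) (F : codeTuple S m) (i : 'I_m) s :
  ddf F i s = dds F i 0 [::] (gchain F i s).
Proof. by rewrite /ddf /gpieces -dds_gen size_pairmap. Qed.

Lemma dds_cat (S : finType) (m : nat) (F : codeTuple S m) (i : 'I_m) n prev P Q :
  dds F i n prev (P ++ Q) = dds F i n prev P ++ dds F i (n + size P) (last prev P) Q.
Proof.
elim: P n prev => [|x P IH] n prev /=; first by rewrite addn0.
by rewrite IH catA addSnnS.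
Qed.

Lemma lcp3 (T : eqType) (L L' : seq T) :
  (exists Q, L' = L ++ Q) \/ (exists y Q, L = L' ++ y :: Q) \/
  (exists P x y Q Q', [/\ x != y, L = P ++ x :: Q & L' = P ++ y :: Q']).
Proof.
elim: L L' => [|x L IH] [|y L'].
- by left; exists [::].
- by left; exists (y :: L').
- by right; left; exists x, L.
- case: (boolP (x == y)) => [/eqP <- | ne].
    case: (IH L') => [[Q ->]|[[z [Q ->]]|[P [a [b [Q [Q' [ne -> ->]]]]]]]].
    + by left; exists Q.
    + by right; left; exists z, Q.
    + by right; right; exists (x :: P), a, b, Q, Q'.
  by right; right; exists [::], x, y, L, L'.
Qed.

Lemma div_false (S : finType) (m : nat) (F : codeTuple S m) (i : 'I_m) s s' P x y Q Q' :
  gchain F i s = P ++ x :: Q -> gchain F i s' = P ++ y :: Q' ->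
  prefix x y -> x != y -> False.
Proof.
move=> E E' hxy ne.
have lt := prefix_neq_size hxy ne.
have [_ [a Ea]] : prefix x (ct_f F i s) /\ exists a, x = ct_f F i a.
  by apply: gchain_mem; rewrite E mem_cat mem_head orbT.
subst x.
have [hy _] : prefix y (ct_f F i s') /\ exists a, y = ct_f F i a.
  by apply: gchain_mem; rewrite E' mem_cat mem_head orbT.
have := gchain_compl (prefix_trans hxy hy); rewrite E' mem_cat => /orP[] hin.
  have := gchain_pw F i s; rewrite E pairwise_cat => /and3P[/allrelP h _ _].
  by have := h _ _ hin (mem_head _ _); rewrite ltnn.
have := gchain_pw F i s'; rewrite E' pairwise_cat => /and3P[_ _].
rewrite pairwise_cons => /andP[/allP h _].
move: hin; rewrite inE => /orP[/eqP e | hin]; first by rewrite e ltnn in lt.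
by have := h _ hin; rewrite ltnNge (ltnW lt).
Qed.
Lemma dd0_size (S : finType) (m : nat) (F : codeTuple S m) (i : 'I_m) g :
  size (ddgamma F i 0 g) = size g.
Proof.
rewrite /ddgamma /=; case: ifP => // _; case: ifP => // _.
by case: g => [|g1 [|g2 t]] //=; case: ifP => //=; rewrite drop0.
Qed.

Lemma ddS_size (S : finType) (m : nat) (F : codeTuple S m) (i : 'I_m) n g :
  2 <= size g -> size (ddgamma F i n.+1 g) = size g.
Proof. by move=> h; rewrite /ddgamma /= size_drop -addn2 subnK. Qed.

Lemma tele (prev : seq bool) (L : seq (seq bool)) :
  path (fun a b : seq bool => size a <= size b) prev L ->
  size prev <= size (last prev L) /\
  sumn [seq size g | g <- pairmap (fun u v : seq bool => drop (size u) v) prev L]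
   = size (last prev L) - size prev.
Proof.
elim: L prev => [|x L IH] prev /=; first by rewrite subnn.
move=> /andP[h p]; have [h1 e] := IH x p; split; first exact: leq_trans h h1.
by rewrite e size_drop addnC addnBA // subnK.
Qed.

Lemma part1 (S : finType) (m : nat) (F : codeTuple S m) (i : 'I_m) s r :
  dec2 F -> (forall j, 3 <= card_P2 F j) ->
  r < size (gpieces F i s) ->
  size (ddgamma F i r (nth [::] (gpieces F i s) r)) = size (nth [::] (gpieces F i s) r).
Proof.
move=> Hd H3; rewrite /gpieces size_pairmap => hr.
case: r hr => [|r] hr; first exact: dd0_size.
rewrite (nth_pairmap [::] [::] _ hr) /=.
apply: (ddS_size F i r); rewrite size_drop.
set L := gchain F i s.
have hr' : r < size L by apply: ltnW.
have lt : size (nth [::] L r) < size (nth [::] L r.+1).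
  by move/(pairwiseP [::]): (gchain_pw F i s) => /(_ r r.+1); apply.
have [pa [a Ea]] := gchain_mem (mem_nth [::] hr').
have [pb [b Eb]] := gchain_mem (mem_nth [::] hr).
rewrite Ea Eb in lt *.
have hp : prefix (ct_f F i a) (ct_f F i b).
  apply: (pre_le (w := ct_f F i s)); [by rewrite -Ea | by rewrite -Eb | exact: ltnW].
have hn : ct_f F i a != ct_f F i b by apply/negP => /eqP e; rewrite e ltnn in lt.
have [h _] := strict_ext Hd H3 hp hn.
by rewrite ltn_subRL addn1; move: h; rewrite addn2.
Qed.

Lemma part2 (S : finType) (m : nat) (F : codeTuple S m) (i : 'I_m) s :
  dec2 F -> (forall j, 3 <= card_P2 F j) ->
  size (ddf F i s) = size (ct_f F i s).
Proof.
move=> Hd H3; rewrite /ddf size_flatten /shape -map_comp.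
rewrite (_ : map _ _ = map (size \o nth [::] (gpieces F i s)) (iota 0 (size (gpieces F i s)))); last first.
  by apply/eq_in_map => r; rewrite mem_iota add0n => /andP[_ hr] /=; apply: part1.
rewrite map_comp -/(mkseq _ _) mkseq_nth /gpieces.
have hp : path (fun a b : seq bool => size a <= size b) [::] (gchain F i s).
  have := pairwise_sorted (gchain_pw F i s).
  case: (gchain F i s) => [|x L] //= hs.
  by apply: sub_path hs => a b; apply: ltnW.
have [_ ->] := tele hp.
by rewrite subn0 (proj1 (gchain_last F i s)).
Qed.

Lemma case2 (S : finType) (m : nat) (F : codeTuple S m) (i : 'I_m) s s' y Q :
  gchain F i s = gchain F i s' ++ y :: Q -> size (ct_f F i s') < size (ct_f F i s).
Proof.
move=> E.
have [_ hv] := gchain_last F i s'.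
have := gchain_pw F i s; rewrite E pairwise_cat => /and3P[/allrelP h _ _].
have lt := h _ _ hv (mem_head _ _).
have [hy _] : prefix y (ct_f F i s) /\ exists a, y = ct_f F i a.
  by apply: gchain_mem; rewrite E mem_cat mem_head orbT.
apply: (leq_trans lt); case/prefixP: hy => t ->; rewrite size_cat; exact: leq_addr.
Qed.

Lemma size_prefix (a b : seq bool) : prefix a b -> size a <= size b.
Proof. by case/prefixP => t ->; rewrite size_cat leq_addr. Qed.

Lemma key3 (S : finType) (m : nat) (F : codeTuple S m) (i : 'I_m) s s' P x y Q Q' :
  x != y -> gchain F i s = P ++ x :: Q -> gchain F i s' = P ++ y :: Q' -> cmpw x y -> False.
Proof.
move=> ne E E'; case/orP => h.
  exact: (div_false E E' h ne).
by apply: (div_false E' E h); rewrite eq_sym.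
Qed.

Lemma dd0id (S : finType) (m : nat) (F : codeTuple S m) (i : 'I_m) g :
  card_P2 F i != 3 -> ddgamma F i 0 g = g.
Proof. by move=> h; rewrite /ddgamma /=; case: ifP => // _; rewrite (negbTE h). Qed.

Lemma part3 (S : finType) (m : nat) (F : codeTuple S m) (i : 'I_m) s s' :
  dec2 F -> (forall j, 3 <= card_P2 F j) ->
  prefix (ct_f F i s) (ct_f F i s') <-> prefix (ddf F i s) (ddf F i s').
Proof.
move=> Hd H3; split => H;
  case: (lcp3 (gchain F i s) (gchain F i s')) => [[Q E]|[[y [Q E]]|[P [x [y [Q [Q' [ne E E']]]]]]]].
- by rewrite !ddfE E (dds_cat _ _ _ _ (gchain F i s) Q); apply: prefix_prefix.
- by have := case2 E; rewrite ltnNge size_prefix.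
- exfalso; apply: (key3 ne E E').
  have [hx _] : prefix x (ct_f F i s) /\ exists a, x = ct_f F i a.
    by apply: gchain_mem; rewrite E mem_cat mem_head orbT.
  have [hy _] : prefix y (ct_f F i s') /\ exists a, y = ct_f F i a.
    by apply: gchain_mem; rewrite E' mem_cat mem_head orbT.
  exact: (cmp_pre (prefix_trans hx H) hy).
- have [_ hu] := gchain_last F i s.
  have : ct_f F i s \in gchain F i s' by rewrite E mem_cat hu.
  by case/gchain_mem.
- have e1 := @part2 _ _ F i s Hd H3; have e2 := @part2 _ _ F i s' Hd H3.
  by have := case2 E; rewrite ltnNge -e1 -e2 size_prefix.
- exfalso; apply: (key3 ne E E').
  have [hx [a Ea]] : prefix x (ct_f F i s) /\ exists a, x = ct_f F i a.
    by apply: gchain_mem; rewrite E mem_cat mem_head orbT.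
  have [hy [a' Ea']] : prefix y (ct_f F i s') /\ exists a, y = ct_f F i a.
    by apply: gchain_mem; rewrite E' mem_cat mem_head orbT.
  move: H; rewrite !ddfE E E' !dds_cat /= prefix_catl2.
  case: (lastP P) E E' => [|P0 b] E E'.
    rewrite /= !drop0 add0n Ea Ea'.
    case: (boolP (card_P2 F i == 3)) => [/eqP Hc | Hc].
      exact: dd0_cmp.
    by rewrite !dd0id //; apply: cmp_cat.
  rewrite last_rcons size_rcons add0n /ddgamma /= => hp.
  have hb : b \in gchain F i s by rewrite E mem_cat mem_rcons mem_head.
  have hb' : b \in gchain F i s' by rewrite E' mem_cat mem_rcons mem_head.
  have [pb [a0 Eb]] := gchain_mem hb.
  have [pb' _] := gchain_mem hb'.
  have ltx : size b < size x.
    have := gchain_pw F i s; rewrite E pairwise_cat => /and3P[/allrelP h _ _].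
    by apply: h; rewrite ?mem_rcons ?mem_head.
  have lty : size b < size y.
    have := gchain_pw F i s'; rewrite E' pairwise_cat => /and3P[/allrelP h _ _].
    by apply: h; rewrite ?mem_rcons ?mem_head.
  have pbx : prefix b x by apply: (pre_le pb hx); apply: ltnW.
  have pby : prefix b y by apply: (pre_le pb' hy); apply: ltnW.
  have nbx : b != x by apply/negP => /eqP e; rewrite e ltnn in ltx.
  have nby : b != y by apply/negP => /eqP e; rewrite e ltnn in lty.
  have [_ Px] := strict_ext Hd H3 (ltac:(by rewrite -Eb -Ea) : prefix (ct_f F i a0) (ct_f F i a)) (ltac:(by rewrite -Eb -Ea)).
  have [_ Py] := strict_ext Hd H3 (ltac:(by rewrite -Eb -Ea') : prefix (ct_f F i a0) (ct_f F i a')) (ltac:(by rewrite -Eb -Ea')).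
  have et := Pbar_uniq Hd H3 Px Py.
  rewrite -Ea -Ea' -Eb in et.
  have c1 := cmp_cat hp.
  have c2 : cmpw (drop (size b) x) (drop (size b) y).
    by rewrite -(cat_take_drop 2 (drop (size b) x)) -(cat_take_drop 2 (drop (size b) y)) et cmp_catl.
  case/prefixP: pbx => tx Ex; case/prefixP: pby => ty Ey.
  by rewrite Ex Ey cmp_catl; rewrite Ex Ey !drop_size_cat in c2.
Qed.

Local Open Scope ring_scope.

Theorem lemma25 (R : realType) (S : finType) (m : nat) (mu : S -> R)
    (F : codeTuple S m) (i : 'I_m) :
  (2 <= #|S|)%N -> (0 < m)%N ->
  (forall s, 0 < mu s <= 1) -> \sum_s mu s = 1 ->
  inF2 mu F ->
  [/\ (forall (s : S) (r : nat), (r < size (gpieces F i s))%N ->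
         size (ddgamma F i r (nth [::] (gpieces F i s) r))
         = size (nth [::] (gpieces F i s) r)),
      (forall s : S, size (ddf F i s) = size (ct_f F i s)) &
      (forall s s' : S,
         prefix (ct_f F i s) (ct_f F i s') <-> prefix (ddf F i s) (ddf F i s'))].
Proof.
move=> _ _ _ _ [_ [Hd H3]]; split.
- by move=> s r hr; apply: part1.
- by move=> s; apply: part2.
- by move=> s s'; apply: part3.
Qed.
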